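(* For every base $\mathcal{B}$, atomic multisets $L,K$ and ILL formulae $\varphi,\psi,\chi$: if $\Vdash^L_{\mathcal{B}}\varphi\oplus\psi$, $\varphi\Vdash^K_{\mathcal{B}}\chi$ and $\psi\Vdash^K_{\mathcal{B}}\chi$, then $\Vdash^{L,K}_{\mathcal{B}}\chi$.
   Context: Fix a set $\mathbb{A}$ of propositional atoms. ILL formulae: $\phi ::= p\in\mathbb{A} \mid \top \mid 0 \mid 1 \mid \phi\multimap\phi \mid \phi\otimes\phi \mid \phi\,\&\,\phi \mid \phi\oplus\phi \mid\ !\phi$. All multisets are finite; ''$\Gamma,\Delta$'' denotes multiset union. Atomic rules and bases: an atomic sequent is $P\Rightarrow p$ with $P$ a multiset of atoms, $p$ an atom. An atomic box is a multiset of atomic sequents. An atomic rule is a triple $\langle\mathbf{A},\mathbf{S},p\rangle$ with $\mathbf{A}$ a multiset of atomic boxes, $\mathbf{S}$ an atomic box, $p$ an atom. A base is a set of atomic rules. An atom $p$ is persistent in $\mathcal{B}$ if some $\langle\varnothing,\mathbf{S},p\rangle\in\mathcal{B}$ has $\mathbf{S}\neq\varnothing$. Derivability $\vdash_{\mathcal{B}}$: (Ref) $p\vdash_{\mathcal{B}}p$; (App) if $\langle\mathbf{A},\mathbf{S},p\rangle\in\mathcal{B}$ with $\mathbf{A}=\{\mathbf{T}_1,\dots,\mathbf{T}_m\}$, and there are atomic multisets $C_1,\dots,C_n$ ($n\ge m$) and a multiset $D=\{d_{m+1},\dots,d_n\}$ of atoms persistent in $\mathcal{B}$ such that $C_i,Q\vdash_{\mathcal{B}}q$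 for every $i\le m$ and every $Q\Rightarrow q\in\mathbf{T}_i$, $C_j\vdash_{\mathcal{B}}d_j$ for every $m<j\le n$, and $D,U\vdash_{\mathcal{B}}v$ for every $U\Rightarrow v\in\mathbf{S}$, then $C_1,\dots,C_n\vdash_{\mathcal{B}}p$. Support $\Vdash^L_{\mathcal{B}}$ (base $\mathcal{B}$, atomic multiset $L$), by induction on formulae: $\Vdash^L_{\mathcal{B}}p$ iff $L\vdash_{\mathcal{B}}p$; $\Vdash^L_{\mathcal{B}}\varphi\multimap\psi$ iff $\varphi\Vdash^L_{\mathcal{B}}\psi$; $\Vdash^L_{\mathcal{B}}\varphi\otimes\psi$ iff for all $\mathcal{C}\supseteq\mathcal{B}$, atomic $K$, atoms $p$: if $\varphi,\psi\Vdash^K_{\mathcal{C}}p$ then $\Vdash^{L,K}_{\mathcal{C}}p$; $\Vdash^L_{\mathcal{B}}1$ iff for all $\mathcal{C}\supseteq\mathcal{B}$, $K$, $p$: if $\Vdash^K_{\mathcal{C}}p$ then $\Vdash^{L,K}_{\mathcal{C}}p$; $\Vdash^L_{\mathcal{B}}\varphi\&\psi$ iff $\Vdash^L_{\mathcal{B}}\varphi$ and $\Vdash^L_{\mathcal{B}}\psi$; $\Vdash^L_{\mathcal{B}}\varphi\oplus\psi$ iff for all $\mathcal{C}\supseteq\mathcal{B}$, $K$, $p$: if $\varphi\Vdash^K_{\mathcal{C}}p$ and $\psi\Vdash^K_{\mathcal{C}}p$ then $\Vdash^{L,K}_{\mathcal{C}}p$; $\Vdash^L_{\mathcal{B}}0$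 iff $\Vdash^{L,K}_{\mathcal{B}}p$ for all atoms $p$ and atomic $K$; $\Vdash^L_{\mathcal{B}}\top$ always; $\Vdash^L_{\mathcal{B}}!\varphi$ iff for all $\mathcal{C}\supseteq\mathcal{B}$, $K$, $p$: if (for all $\mathcal{D}\supseteq\mathcal{C}$, $\Vdash^{\varnothing}_{\mathcal{D}}\varphi$ implies $\Vdash^K_{\mathcal{D}}p$) then $\Vdash^{L,K}_{\mathcal{C}}p$. For nonempty multisets: $\Vdash^L_{\mathcal{B}}\Gamma,\Delta$ iff $L=K,M$ with $\Vdash^K_{\mathcal{B}}\Gamma$ and $\Vdash^M_{\mathcal{B}}\Delta$. For a nonempty antecedent written $!\Delta,\Theta$, where $!\Delta$ collects the formulae with top-level connective $!$ (with $\Delta$ the formulae under those $!$) and $\Theta$ contains none: $!\Delta,\Theta\Vdash^L_{\mathcal{B}}\varphi$ iff for all $\mathcal{C}\supseteq\mathcal{B}$ and atomic $K$, if $\Vdash^{\varnothing}_{\mathcal{C}}\delta$ for every $\delta\in\Delta$ and $\Vdash^K_{\mathcal{C}}\Theta$ then $\Vdash^{L,K}_{\mathcal{C}}\varphi$ (when $\Theta$ is empty, $K$ is empty). An empty antecedent: $\varnothing\Vdash^L_{\mathcal{B}}\varphi$ means $\Vdash^L_{\mathcal{B}}\varphi$. *)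

(* Defs.v *)
From Stdlib Require Import List Permutation.
Import ListNotations.
Set Implicit Arguments.

Section ILL.
Variable A : Type.

Inductive formula : Type :=
| Atom : A -> formula
| Top | Zero | One
| Lolli : formula -> formula -> formula
| Tensor : formula -> formula -> formula
| With : formula -> formula -> formula
| Plus : formula -> formula -> formula
| Bang : formula -> formula.

(* Multisets are lists taken up to permutation. *)
Definition sequent : Type := (list A * A)%type.
Definition box : Type := list sequent.
Record rule : Type := mkRule { prems : list box; sbox : box; concl : A }.
Definition base : Type := rule -> Prop.
Definition ext (B C : base) : Prop := forall r, B r -> C r.

Definition persistent (B : base) (p : A) : Prop :=
  exists S, B (mkRule [] S p) /\ S <> [].

Inductive deriv (B : base) : list A -> A -> Prop :=
| dRef : forall p, deriv B [p] p
| dApp : forall (r : rule) (Cs : list (list A)) (Ds : list (list A * A)) (L : list A),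
    B r ->
    length Cs = length (prems r) ->
    (forall i Q q, i < length Cs -> In (Q, q) (nth i (prems r) []) ->
       deriv B (nth i Cs [] ++ Q) q) ->
    (forall C d, In (C, d) Ds -> persistent B d /\ deriv B C d) ->
    (forall U v, In (U, v) (sbox r) -> deriv B (map snd Ds ++ U) v) ->
    Permutation L (concat Cs ++ concat (map fst Ds)) ->
    deriv B L (concl r).

(* An antecedent item: either !delta (we keep the support of delta at the
   empty multiset) or a non-! formula (we keep its support predicate). *)
Inductive item : Type :=
| IBang : (base -> Prop) -> item
| IPlain : (base -> list A -> Prop) -> item.

Fixpoint bangs_ok (its : list item) (C : base) : Prop :=
  match its with
  | [] => True
  | IBang P :: r => P C /\ bangs_ok r C
  | IPlain _ :: r => bangs_ok r C
  end.

Fixpoint plain_supp (its : list item) (C : base) (K : list A) : Prop :=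
  match its with
  | [] => K = []
  | IBang _ :: r => plain_supp r C K
  | IPlain P :: r => exists K1 K2, Permutation K (K1 ++ K2) /\ P C K1 /\ plain_supp r C K2
  end.

(* !Delta, Theta ||-^L_B phi, with goal C M := ||-^M_C phi *)
Definition ante (its : list item) (B : base) (L : list A)
  (goal : base -> list A -> Prop) : Prop :=
  forall C K, ext B C -> bangs_ok its C -> plain_supp its C K -> goal C (L ++ K).

Fixpoint supp (B : base) (L : list A) (f : formula) {struct f} : Prop :=
  match f with
  | Atom p => deriv B L p
  | Lolli g h =>
      ante [match g with Bang d => IBang (fun C => supp C [] d)
                       | _ => IPlain (fun C K => supp C K g) end]
           B L (fun C M => supp C M h)
  | Tensor g h =>
      forall C K p, ext B C ->
        ante [match g with Bang d => IBang (fun C => supp C [] d)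
                         | _ => IPlain (fun C K => supp C K g) end;
              match h with Bang d => IBang (fun C => supp C [] d)
                         | _ => IPlain (fun C K => supp C K h) end]
             C K (fun D M => deriv D M p) ->
        deriv C (L ++ K) p
  | One => forall C K p, ext B C -> deriv C K p -> deriv C (L ++ K) p
  | With g h => supp B L g /\ supp B L h
  | Plus g h =>
      forall C K p, ext B C ->
        ante [match g with Bang d => IBang (fun C => supp C [] d)
                         | _ => IPlain (fun C K => supp C K g) end]
             C K (fun D M => deriv D M p) ->
        ante [match h with Bang d => IBang (fun C => supp C [] d)
                         | _ => IPlain (fun C K => supp C K h) end]
             C K (fun D M => deriv D M p) ->
        deriv C (L ++ K) p
  | Zero => forall p K, deriv B (L ++ K) p
  | Top => True
  | Bang g =>
      forall C K p, ext B C ->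
        (forall D, ext C D -> supp D [] g -> deriv D K p) ->
        deriv C (L ++ K) p
  end.

Definition item_of (g : formula) : item :=
  match g with
  | Bang d => IBang (fun C => supp C [] d)
  | _ => IPlain (fun C K => supp C K g)
  end.

Definition ante_supp (B : base) (L : list A) (Gamma : list formula) (phi : formula) : Prop :=
  match Gamma with
  | [] => supp B L phi
  | _ => ante (map item_of Gamma) B L (fun C M => supp C M phi)
  end.

End ILL.

(* Main.v *)
Require Import Defs.
From Stdlib Require Import List Permutation.
Import ListNotations.


Section S.
Variable A : Type.
Unset Implicit Arguments.

Lemma ext_trans (B C D : base A) : ext B C -> ext C D -> ext B D.
Proof. unfold ext; auto. Qed.

Lemma ext_refl (B : base A) : ext B B.
Proof. unfold ext; auto. Qed.

Lemma pers_mono (B C : base A) p : ext B C -> persistent B p -> persistent C p.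
Proof. intros E [S [H1 H2]]; exists S; auto. Qed.

Fixpoint deriv_mono (B C : base A) (E : ext B C) L p (d : deriv B L p) {struct d} : deriv C L p.
Proof.
  destruct d as [p|r Cs Ds L Hr Hlen H3 H4 H5 Hp].
  - apply dRef.
  - apply (dApp (B:=C) r Cs Ds); auto.
    + intros i Q q Hi Hin. exact (deriv_mono B C E _ _ (H3 i Q q Hi Hin)).
    + intros C0 d0 Hin. destruct (H4 C0 d0 Hin) as [Hp1 Hd]. split.
      * exact (pers_mono _ _ _ E Hp1).
      * exact (deriv_mono B C E _ _ Hd).
    + intros U v Hin. exact (deriv_mono B C E _ _ (H5 U v Hin)).
Defined.

Lemma deriv_perm (B : base A) L L' p : deriv B L p -> Permutation L L' -> deriv B L' p.
Proof.
  intros d HP. destruct d as [p|r Cs Ds L Hr Hlen H3 H4 H5 Hp].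
  - apply Permutation_length_1_inv in HP. subst. apply dRef.
  - eapply dApp; eauto. eapply Permutation_trans; [apply Permutation_sym; exact HP|exact Hp].
Qed.

Lemma supp_perm (f : formula A) : forall (B : base A) L L', supp B L f -> Permutation L L' -> supp B L' f.
Proof.
  induction f; intros B L L' H HP; simpl in *.
  - eapply deriv_perm; eauto.
  - auto.
  - intros p K. eapply deriv_perm; [apply H|]. apply Permutation_app_tail; auto.
  - intros C K p E d. eapply deriv_perm; [apply (H C K p E d)|]. apply Permutation_app_tail; auto.
  - intros C K E Hb Hp. eapply IHf2; [apply (H C K E Hb Hp)|]. apply Permutation_app_tail; auto.
  - intros C K p E Ha. eapply deriv_perm; [apply (H C K p E Ha)|]. apply Permutation_app_tail; auto.
  - destruct H; split; eauto.
  - intros C K p E H1 H2. eapply deriv_perm; [apply (H C K p E H1 H2)|]. apply Permutation_app_tail; auto.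
  - intros C K p E H1. eapply deriv_perm; [apply (H C K p E H1)|]. apply Permutation_app_tail; auto.
Qed.

Lemma supp_mono (f : formula A) : forall (B C : base A) L, supp B L f -> ext B C -> supp C L f.
Proof.
  induction f; intros B C L H E; simpl in *.
  - eapply deriv_mono; eauto.
  - auto.
  - intros p K. eapply deriv_mono; eauto.
  - intros C' K p E' d. apply H; eauto using ext_trans.
  - intros C' K E' Hb Hp. apply H; eauto using ext_trans.
  - intros C' K p E' Ha. apply H; eauto using ext_trans.
  - destruct H; split; eauto.
  - intros C' K p E' H1 H2. apply H; eauto using ext_trans.
  - intros C' K p E' H1. apply H; eauto using ext_trans.
Qed.

Lemma bangs_mono (g : formula A) (C D : base A) :
  bangs_ok [item_of g] C -> ext C D -> bangs_ok [item_of g] D.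
Proof.
  destruct g; simpl; auto. intros [H _] E. split; auto. eapply supp_mono; eauto.
Qed.

Lemma plain_mono (g : formula A) (C D : base A) K :
  plain_supp [item_of g] C K -> ext C D -> plain_supp [item_of g] D K.
Proof.
  destruct g as [a| | | |g1 g2|g1 g2|g1 g2|g1 g2|g1]; simpl; auto.
  all: intros [K1 [K2 [H1 [H2 H3]]]] E; exists K1, K2; split; [exact H1|split; [|exact H3]].
  all: first [exact (supp_mono (Atom a) C D K1 H2 E)
  | exact (supp_mono (Top _) C D K1 H2 E)
  | exact (supp_mono (Zero _) C D K1 H2 E)
  | exact (supp_mono (One _) C D K1 H2 E)
  | exact (supp_mono (Lolli g1 g2) C D K1 H2 E)
  | exact (supp_mono (Tensor g1 g2) C D K1 H2 E)
  | exact (supp_mono (With g1 g2) C D K1 H2 E)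
  | exact (supp_mono (Plus g1 g2) C D K1 H2 E)].
Qed.

Lemma ante_mono its (B C : base A) K goal : ante its B K goal -> ext B C -> ante its C K goal.
Proof. unfold ante; intros H E D K' E'. apply H. eauto using ext_trans. Qed.

Lemma pa (L K K' : list A) : Permutation ((K ++ K') ++ L) ((K ++ L) ++ K').
Proof. rewrite <- !app_assoc. apply Permutation_app_head. apply Permutation_app_comm. Qed.

Lemma main (phi psi chi : formula A) : forall (B : base A) (L K : list A),
  supp B L (Plus phi psi) ->
  ante_supp B K [phi] chi ->
  ante_supp B K [psi] chi ->
  supp B (L ++ K) chi.
Proof.
  induction chi; intros B L K H H1 H2; simpl in H1, H2 |- *; unfold ante in H1, H2.
  - simpl in H. apply (H B K a (ext_refl _)); exact H1 || exact H2.
  - auto.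
  - intros p K'. rewrite <- app_assoc. apply (H B (K ++ K') p (ext_refl _)).
    + intros D K'' E Hb Hp. eapply deriv_perm; [apply (H1 D K'' E Hb Hp)|]. apply pa.
    + intros D K'' E Hb Hp. eapply deriv_perm; [apply (H2 D K'' E Hb Hp)|]. apply pa.
  - intros C K' p E d. rewrite <- app_assoc. apply (H C (K ++ K') p E).
    + intros D K'' E' Hb Hp. eapply deriv_perm; [apply (H1 D K'' (ext_trans _ _ _ E E') Hb Hp D K' p (ext_refl _)); eapply deriv_mono; eauto|]. apply pa.
    + intros D K'' E' Hb Hp. eapply deriv_perm; [apply (H2 D K'' (ext_trans _ _ _ E E') Hb Hp D K' p (ext_refl _)); eapply deriv_mono; eauto|]. apply pa.
  - intros C K' E Hb Hp. rewrite <- app_assoc. apply IHchi2.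
    + eapply supp_mono; eauto.
    + simpl. intros D K'' E' Hb' Hp'.
      eapply supp_perm; [apply (H1 D K'' (ext_trans _ _ _ E E') Hb' Hp' D K' (ext_refl _))|].
      * eapply bangs_mono; eauto.
      * eapply plain_mono; eauto.
      * apply pa.
    + simpl. intros D K'' E' Hb' Hp'.
      eapply supp_perm; [apply (H2 D K'' (ext_trans _ _ _ E E') Hb' Hp' D K' (ext_refl _))|].
      * eapply bangs_mono; eauto.
      * eapply plain_mono; eauto.
      * apply pa.
  - intros C K' p E Ha. rewrite <- app_assoc. apply (H C (K ++ K') p E).
    + intros D K'' E' Hb Hp. eapply deriv_perm; [apply (H1 D K'' (ext_trans _ _ _ E E') Hb Hp D K' p (ext_refl _)); exact (ante_mono _ _ _ _ _ Ha E')|]. apply pa.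
    + intros D K'' E' Hb Hp. eapply deriv_perm; [apply (H2 D K'' (ext_trans _ _ _ E E') Hb Hp D K' p (ext_refl _)); exact (ante_mono _ _ _ _ _ Ha E')|]. apply pa.
  - split.
    + apply IHchi1; auto; simpl; intros D K'' E Hb Hp; [apply (H1 D K'' E Hb Hp)|apply (H2 D K'' E Hb Hp)].
    + apply IHchi2; auto; simpl; intros D K'' E Hb Hp; [apply (H1 D K'' E Hb Hp)|apply (H2 D K'' E Hb Hp)].
  - intros C K' p E Ha Hb0. rewrite <- app_assoc. apply (H C (K ++ K') p E).
    + intros D K'' E' Hb Hp. eapply deriv_perm; [apply (H1 D K'' (ext_trans _ _ _ E E') Hb Hp D K' p (ext_refl _)); first [exact (ante_mono _ _ _ _ _ Ha E') | exact (ante_mono _ _ _ _ _ Hb0 E')]|]. apply pa.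
    + intros D K'' E' Hb Hp. eapply deriv_perm; [apply (H2 D K'' (ext_trans _ _ _ E E') Hb Hp D K' p (ext_refl _)); first [exact (ante_mono _ _ _ _ _ Ha E') | exact (ante_mono _ _ _ _ _ Hb0 E')]|]. apply pa.
  - intros C K' p E Hf. rewrite <- app_assoc. apply (H C (K ++ K') p E).
    + intros D K'' E' Hb Hp. eapply deriv_perm; [apply (H1 D K'' (ext_trans _ _ _ E E') Hb Hp D K' p (ext_refl _)); intros; apply Hf; eauto using ext_trans|]. apply pa.
    + intros D K'' E' Hb Hp. eapply deriv_perm; [apply (H2 D K'' (ext_trans _ _ _ E E') Hb Hp D K' p (ext_refl _)); intros; apply Hf; eauto using ext_trans|]. apply pa.
Qed.
End S.

Theorem lemma7 (A : Type) (B : base A) (L K : list A) (phi psi chi : formula A) :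
  supp B L (Plus phi psi) ->
  ante_supp B K [phi] chi ->
  ante_supp B K [psi] chi ->
  supp B (L ++ K) chi.
Proof. apply main. Qed.
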